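(* Let $a,M$ be positive integers and let $\lambda=\lambda_1/\lambda_2$ with $\lambda_1,\lambda_2$ coprime integers, $\lambda_2\ge1$. Call a positive integer $L$ feasible (for $a,M,\lambda$) if $a\mid L$, $M\mid L$, $\frac{L}{a}\lambda\in\mathbb{Z}$ and $\frac{L}{M}\lambda\in\mathbb{Z}$. Then the minimal feasible $L$ is $L_{\min}=\lambda_2\,\mathrm{lcm}(a,M)$, and every feasible $L$ is a multiple of $L_{\min}$.
   Context: Interpretation: $L$ is the signal length, $a$ the time shift, $M$ the number of frequency channels (frequency shift $b=L/M$), and $\lambda$ the relative shear, so that the shear parameter is $s=\lambda b$; the conditions in the definition of feasibility are exactly those for these parameters to define a lattice (subgroup) of $\mathbb{Z}_L^2$ generated by $(a,s)^T$ and $(0,b)^T$ in normal form. *)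

(* Defs.v *)
From HB Require Import structures.
From mathcomp Require Import all_boot all_order all_algebra.
Set Implicit Arguments. Unset Strict Implicit. Unset Printing Implicit Defensive.
Import Order.TTheory GRing.Theory Num.Theory.
Local Open Scope ring_scope.

Definition feasible (a M : nat) (lam : rat) (L : nat) : Prop :=
  [/\ (0 < L)%N, (a %| L)%N, (M %| L)%N,
      (L%:R / a%:R) * lam \is a Num.int
    & (L%:R / M%:R) * lam \is a Num.int].

(* Main.v *)
Require Import Defs.
From HB Require Import structures.
From mathcomp Require Import all_boot all_order all_algebra.
Import Order.TTheory GRing.Theory Num.Theory.

Lemma key (k : nat) (l1 : int) (l2 : nat) : (0 < l2)%N -> coprimez l1 (Posz l2) ->
  ((k%:R * (l1%:~R / l2%:R) : rat) \is a Num.int) = (l2 %| k)%N.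
Proof.
move=> l2p cop.
have E : (k%:R * (l1%:~R / l2%:R) : rat) = ((Posz k * l1)%R%:~R / (Posz l2)%:~R)%R.
  by rewrite rmorphM /= mulrA.
rewrite E.
have -> : (l2 %| k)%N = (Posz l2 %| (Posz k * l1)%R)%Z.
  by rewrite Gauss_dvdzl // coprimez_sym.
apply/idP/idP; last exact: Qint_dvdz.
set x := (_ / _ : rat) => H; apply/dvdzP; exists (numq x).
apply: (@intr_inj rat). rewrite [RHS]rmorphM /= numqK // /x.
rewrite divfK // intr_eq0; apply/eqP => h; move: l2p; case: h => ->.
by [].
Qed.

Lemma feas_iff (a L : nat) (l1 : int) (l2 : nat) : (0 < a)%N -> (0 < l2)%N ->
  coprimez l1 (Posz l2) -> (a %| L)%N ->
  ((L%:R / a%:R) * (l1%:~R / l2%:R) : rat) \is a Num.int = (l2 %| L %/ a)%N.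
Proof.
move=> ap l2p cop aL.
have -> : (L%:R / a%:R : rat) = (L %/ a)%:R%R.
  by rewrite -{1}(divnK aL) natrM mulfK // pnatr_eq0 -lt0n.
exact: key.
Qed.

Lemma feas_dvd (a L l2 : nat) : (0 < a)%N -> (a %| L)%N -> (l2 %| L %/ a)%N = (l2 * a %| L)%N.
Proof. by move=> ap aL; rewrite -{2}(divnK aL) dvdn_pmul2r. Qed.

Theorem proposition3p7 (a M : nat) (l1 : int) (l2 : nat) :
  (0 < a)%N -> (0 < M)%N -> (1 <= l2)%N -> coprimez l1 (Posz l2) ->
  let lam : rat := (l1%:~R / l2%:R)%R in
  let Lmin := (l2 * lcmn a M)%N in
  [/\ feasible a M lam Lmin,
      (forall L, feasible a M lam L -> (Lmin <= L)%N)
    & (forall L, feasible a M lam L -> (Lmin %| L)%N)].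
Proof.
move=> ap Mp l2p cop lam Lmin.
have dv : forall L, feasible a M lam L -> (Lmin %| L)%N.
  move=> L [Lp aL ML ha hM].
  move: ha hM; rewrite /lam feas_iff // feas_iff // feas_dvd // feas_dvd // => h1 h2.
  by rewrite /Lmin muln_lcmr dvdn_lcm; apply/andP.
have aL : (a %| Lmin)%N by rewrite /Lmin dvdn_mull // dvdn_lcml.
have ML : (M %| Lmin)%N by rewrite /Lmin dvdn_mull // dvdn_lcmr.
have Lp : (0 < Lmin)%N by rewrite /Lmin muln_gt0 lcmn_gt0 ap Mp l2p.
split=> //.
- split=> //; rewrite /lam feas_iff // feas_dvd // /Lmin dvdn_pmul2l // ?(dvdn_lcml, dvdn_lcmr) //.
- by move=> L hL; apply: dvdn_leq; [case: hL | exact: dv].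
Qed.
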